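(* Let $T$ be a sequence of length $n$ over $\mathbb{A}$ and $I\subseteq\mathbb{A}$ an itemset with $|I|\ge 2$. Let $0<i<n$ and let $r_i^1(I),\dots,r_i^{|I|}(I)$ be the ordering of $I$ described in the context. If $T[i]=r_i^{|I|}(I)$, then for every integer $k\ge 0$ $$H_i[k]=H_{i-1}[k]+\mathbf{1}\big[k=\lambda(r_i^{|I|}(I),i-1)\big]-\mathbf{1}\big[k=\lambda(r_i^{|I|-1}(I),i-1)\big].$$ If $T[i]\neq r_i^{|I|}(I)$ (in particular if $T[i]\notin I$), then $H_i[k]=H_{i-1}[k]$ for all $k\ge 0$.
   Context: A sequence $T=(T[0],\dots,T[n-1])$ has entries in $\mathbb{A}$. For $e\in\mathbb{A}$ and $-1\le i\le n-1$, let $\lambda(e,i)=i-\max\{j\le i:T[j]=e\}$, where the maximum of the empty set is taken to be $-1$ (so $\lambda(e,i)=i+1$ if $e$ does not occur among $T[0],\dots,T[i]$). For $0<i<n$, the elements of $I$ are listed as $r_i^1(I),\dots,r_i^{|I|}(I)$ so that $\lambda(r_i^1(I),i-1)\le\lambda(r_i^2(I),i-1)\le\dots\le\lambda(r_i^{|I|}(I),i-1)$ (ties broken arbitrarily but fixed); thus $r_i^{|I|}(I)$ is an item of $I$ last seen furthest in the past before index $i$. For nonempty $A\subseteq I$ and an index $j$ with $T[j]\in A$, let $p_A(j)=\max\{j'<j:T[j']\in A\}$ (or $-1$ if no such $j'$); the $A$-gap closed at $j$ is $T[p_A(j)+1..j-1]$, of length $j-1-p_A(j)\ge 0$. For $-1\le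 i\le n-1$ and integers $k\ge0$, the partial gap histogram is $$H_i[k]=\sum_{\emptyset\ne A\subseteq I}(-1)^{|A|+1}\,\#\{\,j\le i:\ T[j]\in A,\ j-1-p_A(j)=k\,\}.$$ $\mathbf{1}[\cdot]$ denotes the indicator (1 if the condition holds, 0 otherwise). *)

(* Defs.v *)
From HB Require Import structures.
From mathcomp Require Import all_boot all_order all_algebra.
From mathcomp Require Import finmap.
Set Implicit Arguments. Unset Strict Implicit. Unset Printing Implicit Defensive.
Import GRing.Theory Num.Theory.
Local Open Scope fset_scope.

(* The sequence T of length n is represented by a function T : nat -> A;
   only the values T 0, ..., T (n-1) are ever used. *)

(* lastp1 T e i = 1 + max{ j <= i : T j = e }, or 0 if no such j
   (i.e. the max with the convention max(empty) = -1, shifted by one). *)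
Definition lastp1 (A : eqType) (T : nat -> A) (e : A) (i : nat) : nat :=
  \max_(j < i.+1 | T j == e) j.+1.

(* lambda(e, i) = i - max{j <= i : T j = e}  (with max empty = -1), for i >= 0. *)
Definition lam (A : eqType) (T : nat -> A) (e : A) (i : nat) : nat :=
  i.+1 - lastp1 T e i.

(* length of the B-gap closed at j:  j - 1 - p_B(j), where
   p_B(j) = max{ j' < j : T j' \in B } (or -1). *)
Definition gapl (A : choiceType) (T : nat -> A) (B : {fset A}) (j : nat) : nat :=
  j - \max_(j' < j | T j' \in B) j'.+1.

Definition H (A : choiceType) (T : nat -> A) (I : {fset A}) (i k : nat) : int :=
  (\sum_(B <- fpowerset I | B != fset0)
     (-1) ^+ (#|` B|).+1 *
     (#|[set j : 'I_i.+1 | (T j \in B) && (gapl T B j == k)]|)%:Z)%R.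

(* Main.v *)
Require Import Defs.
From HB Require Import structures.
From mathcomp Require Import all_boot all_order all_algebra.
From mathcomp Require Import finmap zify.
Import GRing.Theory Num.Theory.
Local Open Scope fset_scope.
Lemma card_ordS n (P : pred nat): (#|[set j : 'I_n.+1 | P j]| = #|[set j : 'I_n | P j]| + P n)%N.
Proof.
rewrite -!sum1_card !big_mkcond /= big_ord_recr /=.
rewrite [in RHS](big_mkcond (fun j : 'I_n => j \in [set j : 'I_n | P j])).
rewrite in_set /=; congr (_ + _)%N.
by apply: eq_bigr => j _; rewrite !in_set.
Qed.
Lemma int_self_opp (x : int) : x = (- x)%R -> x = 0%R.
Proof. lia. Qed.

Section G.
Variable A : choiceType.
Implicit Types (T : nat -> A) (B C : {fset A}).

Definition g T B j := (\max_(j' < j | T j' \in B) j'.+1)%N.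

Lemma gU T y C j : g T (y |` C) j = maxn (g T [fset y] j) (g T C j).
Proof.
rewrite /g big_mkcond [X in maxn X _]big_mkcond [X in maxn _ X]big_mkcond -big_split /=.
apply: eq_bigr => j' _; rewrite !inE.
by case: (T j' == y); case: (T j' \in C) => //=; rewrite ?maxnn ?max0n ?maxn0.
Qed.

Lemma g_le T z C j : z \in C -> (g T [fset z] j <= g T C j)%N.
Proof. by move=> zC; rewrite -(fsetD1K zC) gU leq_maxl. Qed.

Lemma g_abs T y z C j : z \in C -> (g T [fset y] j <= g T [fset z] j)%N ->
  g T (y |` C) j = g T C j.
Proof. by move=> zC le; rewrite gU; apply/maxn_idPr; exact: (leq_trans le (g_le T _ _ j zC)). Qed.

Lemma g0 T j : g T fset0 j = 0%N.
Proof. by rewrite /g big_pred0 // => j'; rewrite inE. Qed.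

Lemma lastp1_g T e m : lastp1 T e m = g T [fset e] m.+1.
Proof. by rewrite /lastp1 /g; apply: eq_bigl => j; rewrite inE. Qed.

Lemma lastp1_le T e m : (lastp1 T e m <= m.+1)%N.
Proof. by apply/bigmax_leqP => j _; exact: ltn_ord. Qed.

Definition tg (y : A) B := if y \in B then B `\ y else y |` B.

Lemma tgK y : involutive (tg y).
Proof.
move=> B; rewrite /tg; case yB: (y \in B).
  by rewrite !inE eqxx /= fsetD1K.
by rewrite fsetU11 fsetU1K // yB.
Qed.

Lemma tg_sub y B I : y \in I -> B `<=` I -> tg y B `<=` I.
Proof.
move=> yI BI; rewrite /tg; case: (y \in B).
  exact: fsubset_trans (fsubD1set _ _) BI.
by rewrite fsubUset fsub1set yI.
Qed.

Definition F T x i k B : int :=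
  ((-1) ^+ (#|` B|).+1 * (((x \in B) && (i - g T B i == k))%N : nat)%:Z)%R.

Lemma Ftog T x y i k B : x != y ->
  (x \in B -> exists2 z, z \in B & (z != y) && (g T [fset y] i <= g T [fset z] i)%N) ->
  F T x i k (tg y B) = (- F T x i k B)%R.
Proof.
move=> xy H; rewrite /F /tg; case yB: (y \in B).
  have xt : (x \in B `\ y) = (x \in B) by rewrite !inE xy.
  case xB: (x \in B); last by rewrite xt xB /= !mulr0 oppr0.
  have [z zB /andP[zy le]] := H xB.
  have gE : g T (B `\ y) i = g T B i.
    by rewrite -{2}(fsetD1K yB) (@g_abs T y z _ i _ le) // !inE zy.
  by rewrite gE xt xB (cardfsD1 y B) yB add1n [in RHS]exprS mulN1r mulNr opprK.
have xt : (x \in y |` B) = (x \in B) by rewrite !inE (negbTE xy).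
case xB: (x \in B); last by rewrite xt xB /= !mulr0 oppr0.
have [z zB /andP[zy le]] := H xB.
by rewrite (@g_abs T y z _ i _ le) // xt xB cardfsU1 yB add1n [in LHS]exprS mulN1r mulNr.
Qed.

End G.
Arguments g {A}.
Arguments F {A}.
Arguments tg {A}.
Arguments gU {A}.
Arguments g_le {A}.
Arguments g_abs {A}.
Arguments g0 {A}.
Arguments lastp1_g {A}.
Arguments lastp1_le {A}.
Arguments tgK {A}.
Arguments tg_sub {A}.
Arguments Ftog {A}.

Lemma sum_invol (X : eqType) (s : seq X) (t : X -> X) (f : X -> int) :
  uniq s -> involutive t -> {in s, forall B, t B \in s} ->
  {in s, forall B, f (t B) = - f B}%R -> (\sum_(B <- s) f B)%R = 0%R.
Proof.
move=> us ti ts ft.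
have pe : perm_eq s (map t s).
  apply: uniq_perm => //; first by rewrite map_inj_uniq //; exact: inv_inj.
  move=> B; apply/idP/mapP.
    by move=> Bs; exists (t B); [exact: ts | rewrite ti].
  by case=> C Cs ->; apply: ts.
apply: int_self_opp.
by rewrite {1}(perm_big _ pe) big_map (eq_big_seq _ ft) sumrN.
Qed.

Lemma Hdiff (A : choiceType) (T : nat -> A) (I : {fset A}) m k :
  H T I m.+1 k = (H T I m k + \sum_(B <- fpowerset I) F T (T m.+1) m.+1 k B)%R.
Proof.
have -> : (\sum_(B <- fpowerset I) F T (T m.+1) m.+1 k B =
           \sum_(B <- fpowerset I | B != fset0) F T (T m.+1) m.+1 k B)%R.
  rewrite [RHS]big_mkcond; apply: eq_bigr => B _.
  by case: eqP => // ->; rewrite /F inE /= mulr0.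
rewrite /H -big_split; apply: eq_bigr => B _.
rewrite (card_ordS m.+1 (fun j : nat => (T j \in B) && (gapl T B j == k))) PoszD mulrDr.
by [].
Qed.

Lemma zero_sum (A : choiceType) (T : nat -> A) (I : {fset A}) m k y :
  y \in I -> y != T m.+1 ->
  (T m.+1 \in I -> (g T [fset y] m.+1 <= g T [fset T m.+1] m.+1)%N) ->
  (\sum_(B <- fpowerset I) F T (T m.+1) m.+1 k B)%R = 0%R.
Proof.
move=> yI yx le.
apply: (@sum_invol _ _ (tg y)); first exact: fset_uniq.
- exact: tgK.
- by move=> B; rewrite !fpowersetE => BI; apply: tg_sub.
move=> B; rewrite fpowersetE => BI; apply: Ftog; first by rewrite eq_sym.
move=> xB; exists (T m.+1) => //; rewrite eq_sym yx /=.
by apply: le; apply: (fsubsetP BI).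
Qed.

Lemma lam_g (A : choiceType) (T : nat -> A) m y z :
  (lam T z m <= lam T y m)%N -> (g T [fset y] m.+1 <= g T [fset z] m.+1)%N.
Proof.
rewrite /lam !lastp1_g.
have := lastp1_le T y m; have := lastp1_le T z m; rewrite !lastp1_g.
lia.
Qed.

Theorem mainTheorem3 (A : choiceType) (n : nat) (T : nat -> A) (I : {fset A})
    (i : nat) (r : seq A) :
  (2 <= #|` I|)%N -> (0 < i)%N -> (i < n)%N ->
  perm_eq r (enum_fset I) ->
  sorted (fun x y => (lam T x i.-1 <= lam T y i.-1)%N) r ->
  (T i = nth (T i) r (#|` I| - 1) ->
     forall k : nat,
       H T I i k = (H T I i.-1 k
                    + (k == lam T (nth (T i) r (#|` I| - 1)) i.-1)%:Z
                    - (k == lam T (nth (T i) r (#|` I| - 2)) i.-1)%:Z)%R) /\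
  (T i <> nth (T i) r (#|` I| - 1) ->
     forall k : nat, H T I i k = H T I i.-1 k).
Proof.
case: i => [//|m] I2 _ _ pr so /=.
set x := T m.+1.
have sz : size r = #|` I| by rewrite (perm_size pr).
have ur : uniq r by rewrite (perm_uniq pr) fset_uniq.
have memr : forall e, (e \in r) = (e \in I) by move=> e; rewrite (perm_mem pr).
have nthI : forall p, (p < #|` I|)%N -> nth x r p \in I.
  by move=> p hp; rewrite -memr mem_nth // sz.
have so' : forall p q, (p <= q)%N -> (q < #|` I|)%N ->
    (lam T (nth x r p) m <= lam T (nth x r q) m)%N.
  move=> p q pq hq.
  have := @sorted_leq_nth A (fun a b => (lam T a m <= lam T b m)%N)
     (fun b a c => @leq_trans _ _ _) (fun a => leqnn _) x r so p q.
  by rewrite !inE sz (leq_ltn_trans pq hq) hq; apply.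
have posI : forall e, e \in I -> exists2 p, (p < #|` I|)%N & nth x r p = e.
  move=> e eI; exists (index e r); first by rewrite -sz index_mem memr.
  by rewrite nth_index // memr.
set N := #|` I|.
have hN1 : (N - 1 < N)%N by rewrite /N; lia.
have hN2 : (N - 2 < N)%N by rewrite /N; lia.
split.
- move=> xl k; rewrite Hdiff.
  set y := nth x r (N - 2).
  have yI : y \in I by apply: nthI.
  have yx : y != x.
    by rewrite xl /y nth_uniq ?sz //; rewrite /N; lia.
  have lyx : (lam T y m <= lam T x m)%N by rewrite xl; apply: so' => //; lia.
  have allz : forall z, z \in I -> z != x -> (lam T z m <= lam T y m)%N.
    move=> z zI zx; have [q hq qz] := posI z zI; rewrite -qz; apply: so' => //.
    have : q != (N - 1)%N by apply/negP => /eqP qe; move: zx; rewrite -qz qe -xl eqxx.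
    rewrite /N; lia.
  rewrite -xl.
  case: (ltnP (lam T y m) (lam T x m)) => [lt|ge]; last first.
    have eqyx : lam T y m = lam T x m by apply/eqP; rewrite eqn_leq lyx ge.
    rewrite (@zero_sum _ T I m k y yI yx) ?eqyx ?addr0 ?addrK //.
    by move=> _; apply: lam_g; rewrite eqyx.
  have xI : x \in I by rewrite xl; apply: nthI.
  set a := [fset x]; set b := y |` a.
  have yna : y \notin a by rewrite inE.
  have aI : a \in fpowerset I by rewrite fpowersetE fsub1set.
  have bI : b \in fpowerset I by rewrite fpowersetE fsubUset !fsub1set yI xI.
  have ab : b != a by apply/eqP => e; move: yna; rewrite -e fsetU11.
  have tga : tg y a = b by rewrite /tg (negbTE yna).
  have tgb : tg y b = a by rewrite /tg fsetU11 fsetU1K.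
  rewrite (bigD1_seq a) ?fset_uniq // -big_filter.
  rewrite (bigD1_seq b) ?filter_uniq ?fset_uniq ?mem_filter ?ab // -big_filter.
  rewrite (@sum_invol _ _ (tg y)).
  - have Fa : F T x m.+1 k a = ((k == lam T x m)%:Z)%R.
      rewrite /F cardfs1 fset11 /= /lam lastp1_g eq_sym.
      by rewrite (_ : (-1) ^+ 2 = 1 :> int)%R ?mul1r.
    have Fb : F T x m.+1 k b = (- (k == lam T y m)%:Z)%R.
      have gb : g T b m.+1 = g T [fset y] m.+1.
        by rewrite /b gU; apply/maxn_idPl; apply: (@lam_g _ T m x y (ltnW lt)).
      rewrite /F gb cardfsU1 yna cardfs1 !inE eqxx orbT /= /lam lastp1_g eq_sym.
      by rewrite (_ : (-1) ^+ 3 = -1 :> int)%R ?mulN1r.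
    by rewrite Fa Fb /= addr0 addrA.
  - by rewrite !filter_uniq ?fset_uniq.
  - exact: tgK.
  - move=> B; rewrite !mem_filter => /andP[Bb /andP[Ba Bs]].
    apply/and3P; split.
    + apply/eqP => e; move/eqP: Ba; apply; by rewrite -(tgK y B) e tgb.
    + apply/eqP => e; move/eqP: Bb; apply; by rewrite -(tgK y B) e tga.
    + by move: Bs; rewrite !fpowersetE => BI; apply: tg_sub.
  move=> B; rewrite !mem_filter => /andP[Bb /andP[Ba Bs]].
  move: Bs; rewrite fpowersetE => BI.
  apply: Ftog; first by rewrite eq_sym.
  move=> xB.
  case hz: (has (fun e => (e != x) && (e != y)) (enum_fset B)).
    move/hasP: hz => [z zB /andP[zx zy]]; exists z => //; rewrite zy /=.
    by apply: lam_g; apply: allz => //; apply: (fsubsetP BI).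
  exfalso; move/hasPn: hz => hz.
  have hB : forall e, e \in B -> (e == x) || (e == y).
    by move=> e /hz; rewrite negb_and !negbK.
  case yB: (y \in B).
    move/eqP: Bb; apply; apply/fsetP => e; rewrite !inE; apply/idP/idP.
      by move/hB; rewrite orbC.
    by case/orP => /eqP ->.
  move/eqP: Ba; apply; apply/fsetP => e; rewrite !inE; apply/idP/idP.
    move=> eB; case/orP: (hB e eB) => // /eqP ey.
    by rewrite -ey eB in yB.
  by move/eqP ->.
- move=> xl k; rewrite Hdiff.
  set y := nth x r (N - 1).
  have yI : y \in I by apply: nthI.
  have yx : y != x by apply/eqP => e; apply: xl; exact: (esym e).
  rewrite (@zero_sum _ T I m k y yI yx) ?addr0 //.
  move=> xI; apply: lam_g.
  have [p hp px] := posI x xI.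
  have := so' p (N - 1)%N _ hN1; rewrite px; apply.
  by move: hp; rewrite /N; lia.
Qed.
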